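(* Let $N\ge 4$, $1\le m\le N$ and $1\le k\le N$ be integers. Consider a uniformly random ranking of $N$ items exactly $m$ of which are relevant, i.e. the set of positions of the relevant items is a uniformly random $m$-element subset of $\{1,\dots,N\}$. For $j=1,\dots,N$ let $I_j\in\{0,1\}$ equal $1$ iff the item at position $j$ is relevant, let $P@i=\frac1i\sum_{j=1}^i I_j$, and let $AP@k=\frac{1}{\min(m,k)}\sum_{i=1}^k P@i\cdot I_i$. Then $$\operatorname{Var}(AP@k)=\frac{1}{M^2}\frac{m}{N}\Big[k\big(C+2(E-F)+(k-1)G\big)+H_k\big(B-2(E-kF)\big)+H_k^2 D+H_k^{(2)}(A-D)\Big],$$ where $M=\min(m,k)$, $H_k=\sum_{i=1}^k\frac1i$, $H_k^{(2)}=\sum_{i=1}^k\frac1{i^2}$, and \begin{align*} A&=1-\frac{m}{N}-\frac{m-1}{N-1}\left(3-2\frac{m-2}{N-2}-\frac{m}{N}\left(2-\frac{m-1}{N-1}\right)\right),\\ B&=\frac{m-1}{N-1}\left(3\left(1-\frac{m-2}{N-2}\right)-2\frac{m}{N}\left(1-\frac{m-1}{N-1}\right)\right),\\ C&=\frac{m-1}{N-1}\left(\frac{m-2}{N-2}-\frac{m(m-1)}{N(N-1)}\right),\\ D&=\frac{m-1}{N-1}\left(2-5\frac{m-2}{N-2}+3\frac{(m-2)(m-3)}{(N-2)(N-3)}\right)-\frac{m}{N}\left(1-\frac{m-1}{N-1}\right)^2,\\ E&=\frac{m-1}{N-1}\left(3\frac{m-2}{N-2}\left(1-\frac{m-3}{N-3}\right)-\frac{m}{N}\left(1-\frac{m-1}{N-1}\right)\right),\\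 F&=\frac{m-1}{N-1}\left(\frac{m-2}{N-2}\left(1-\frac{m-3}{N-3}\right)-\frac{m}{N}\left(1-\frac{m-1}{N-1}\right)\right),\\ G&=\frac{m-1}{N-1}\left(\frac{(m-2)(m-3)}{(N-2)(N-3)}-\frac{m}{N}\frac{m-1}{N-1}\right). \end{align*}
   Context: This is the offline evaluation model (sampling of the $m$ relevant positions among $N$ without replacement, with equal probabilities). *)

(* Defs.v *)
From HB Require Import structures.
From mathcomp Require Import all_boot all_order all_algebra.
Set Implicit Arguments. Unset Strict Implicit. Unset Printing Implicit Defensive.
Import Order.TTheory GRing.Theory Num.Theory.
Local Open Scope ring_scope.

Section Offline.
Variables (R : realFieldType) (N m : nat).

(* Sample space: the set S of positions (ordinal i <-> position i+1) of the
   relevant items, uniformly distributed over all m-element subsets. *)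
Definition outcomes : {set {set 'I_N}} := [set S : {set 'I_N} | #|S| == m].

Definition Ind (S : {set 'I_N}) (j : nat) : R :=
  if [exists i : 'I_N, (i.+1 == j) && (i \in S)] then 1 else 0.

Definition Pat (S : {set 'I_N}) (i : nat) : R :=
  (i%:R)^-1 * \sum_(1 <= j < i.+1) Ind S j.

Definition APat (k : nat) (S : {set 'I_N}) : R :=
  ((minn m k)%:R)^-1 * \sum_(1 <= i < k.+1) Pat S i * Ind S i.

Definition Expect (X : {set 'I_N} -> R) : R :=
  (#|outcomes|%:R)^-1 * \sum_(S in outcomes) X S.

Definition Variance (X : {set 'I_N} -> R) : R :=
  Expect (fun S => (X S - Expect X) ^+ 2).

End Offline.

Definition harm (R : realFieldType) (k : nat) : R := \sum_(1 <= i < k.+1) (i%:R)^-1.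
Definition harm2 (R : realFieldType) (k : nat) : R := \sum_(1 <= i < k.+1) (i%:R ^+ 2)^-1.

(* Main.v *)
Require Import Defs.
From HB Require Import structures.
From mathcomp Require Import all_boot all_order all_algebra.
Import Order.TTheory GRing.Theory Num.Theory.
Local Open Scope ring_scope.
From mathcomp Require Import zify ring lra.
Set Warnings "-notation-overridden,-ambiguous-paths".

Definition su (s : seq nat) : nat := size (undup s).

Lemma su_eq s1 s2 : s1 =i s2 -> su s1 = su s2.
Proof.
move=> e; apply: perm_size; apply: uniq_perm; rewrite ?undup_uniq // => x.
by rewrite !mem_undup.
Qed.

Lemma su_cons x s : su (x :: s) = if x \in s then su s else (su s).+1.
Proof. by rewrite /su /=; case: ifP. Qed.

Lemma sum_mem_nat n (s : seq nat) : uniq s ->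
  (\sum_(0 <= j < n) (j \in s) = count (fun x => (x < n)%N) s)%N.
Proof.
move=> us; elim: n => [|n IH].
  by rewrite big_geq //; elim: s {us} => //.
rewrite big_nat_recr //= IH.
have -> : count (fun x => (x < n.+1)%N) s = count (predU (fun x => (x < n)%N) (pred1 n)) s.
  by apply: eq_count => x /=; rewrite ltnS leq_eqVlt orbC.
rewrite -[RHS]addn0.
have <- : count (predI (fun x => (x < n)%N) (pred1 n)) s = 0%N.
  by rewrite (eq_count (a2 := pred0)) ?count_pred0 // => x /=; rewrite andbC; case: eqP => //= ->; rewrite ltnn.
by rewrite count_predUI count_uniq_mem.
Qed.

Lemma count_all n s : all (fun x => (x < n)%N) s ->
  count (fun x => (x < n)%N) (undup s) = su s.
Proof.
move=> H; rewrite /su -(count_predT (undup s)); apply: eq_in_count => x.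
by rewrite mem_undup => /(allP H).
Qed.

Section Pure.
Variable R : realFieldType.

Lemma sum_su (h : nat -> R) n s :
  \sum_(0 <= j < n) h (su (j :: s)) =
  (count (fun x => (x < n)%N) (undup s))%:R * h (su s)
  + (n%:R - (count (fun x => (x < n)%N) (undup s))%:R) * h (su s).+1.
Proof.
have E : forall j, h (su (j :: s)) = ((j \in undup s)%:R * h (su s)
      + (1 - (j \in undup s)%:R) * h (su s).+1).
  move=> j; rewrite su_cons mem_undup; case: (j \in s) => /=.
    by rewrite mul1r subrr mul0r addr0.
  by rewrite mul0r add0r subr0 mul1r.
rewrite (eq_bigr _ (fun j _ => E j)) big_split /= -!mulr_suml sumrB.
rewrite -natr_sum sum_mem_nat ?undup_uniq //.
by rewrite sumr_const_nat subn0.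
Qed.

Variable w : nat -> R.

Definition Tm i i' := \sum_(0 <= j < i.+1) \sum_(0 <= j' < i'.+1) w (su [:: j; i; j'; i']).

Lemma Tm_sym i i' : Tm i i' = Tm i' i.
Proof.
rewrite /Tm exchange_big_nat; apply: eq_bigr => j' _; apply: eq_bigr => j _.
congr (w _); apply: su_eq => x; rewrite !inE.
by case: (x == j); case: (x == i); case: (x == j'); case: (x == i').
Qed.

Definition g (n u : nat) : R := u%:R * w u + (n%:R - u%:R) * w u.+1.

Lemma Tm_inner i i' j : (j <= i)%N -> (i <= i')%N ->
  \sum_(0 <= j' < i'.+1) w (su [:: j; i; j'; i']) = g i'.+1 (su (j :: [:: i; i'])).
Proof.
move=> ji ii'.
rewrite (eq_bigr (fun j' => w (su (j' :: [:: j; i; i'])))); last first.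
  move=> j' _; congr (w _); apply: su_eq => x; rewrite !inE.
  by case: (x == j); case: (x == i); case: (x == j'); case: (x == i').
rewrite sum_su count_all //= !ltnS ii' leqnn andbT (leq_trans ji ii') //.
Qed.

Lemma Tm_lt i i' : (i < i')%N ->
  Tm i i' = (2 * w 2 + (i'.+1%:R - 2) * w 3) + i%:R * (3 * w 3 + (i'.+1%:R - 3) * w 4).
Proof.
move=> lt; rewrite /Tm.
rewrite (@eq_big_nat _ 0 +%R 0 i.+1 _ (fun j => g i'.+1 (su (j :: [:: i; i'])))); last first.
  by move=> j /andP[_ hj]; apply: Tm_inner => //; apply: ltnW.
rewrite sum_su.
have hi : (i \in [:: i']) = false by rewrite inE (ltn_eqF lt).
rewrite /= hi /= ltnSn.
have -> : (i' < i.+1)%N = false by rewrite ltnS leqNgt lt.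
rewrite /su /= hi /g /= addn0 -[i.+1]addn1 -[i'.+1]addn1 !natrD.
lra.
Qed.

Lemma Tm_eq i : Tm i i = w 1 + 3 * i%:R * w 2 + i%:R * (i%:R - 1) * w 3.
Proof.
rewrite /Tm.
rewrite (@eq_big_nat _ 0 +%R 0 i.+1 _ (fun j => g i.+1 (su (j :: [:: i; i])))); last first.
  by move=> j /andP[_ hj]; apply: Tm_inner.
rewrite sum_su.
have hi : (i \in [:: i]) = true by rewrite inE eqxx.
rewrite /= hi /= ltnSn.
rewrite /su /= hi /g /= addn0 -[i.+1]addn1 !natrD.
lra.
Qed.

Definition Hs k : R := \sum_(0 <= i < k) (i.+1%:R)^-1.
Definition H2s k : R := \sum_(0 <= i < k) ((i.+1%:R) ^+ 2)^-1.

Lemma natS_neq0 k : (k.+1%:R : R) != 0.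
Proof. by rewrite pnatr_eq0. Qed.

Lemma sum_lin k (a b : R) :
  \sum_(0 <= i < k) (i.+1%:R)^-1 * (a + i%:R * b) = (a - b) * Hs k + k%:R * b.
Proof.
elim: k => [|k IH]; first by rewrite /Hs !big_geq // mulr0 mul0r addr0.
rewrite /Hs !big_nat_recr //= IH /Hs.
have h := natS_neq0 k.
move: h; rewrite -[k.+1]addn1 natrD => h.
by field.
Qed.

Lemma S1_eq k :
  \sum_(0 <= i < k) (i.+1%:R)^-1 * \sum_(0 <= j < i.+1) w (su [:: j; i])
  = Hs k * w 1 + (k%:R - Hs k) * w 2.
Proof.
rewrite (@eq_big_nat _ 0 +%R 0 k _ (fun i => (i.+1%:R)^-1 * (w 1 + i%:R * w 2))); last first.
  move=> i _; congr (_ * _); rewrite sum_su /= ltnSn /su /=.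
  rewrite -[i.+1]addn1 natrD; lra.
rewrite sum_lin; lra.
Qed.

Definition Q k : R := let H := Hs k in let H2 := H2s k in let K := k%:R in
  H2 * w 1 + 3 * (H - H2) * w 2 + (K - 3 * H + 2 * H2) * w 3
  + (H ^+ 2 - H2) * (2 * w 2 - 5 * w 3 + 3 * w 4) + 2 * (K * H - K) * (w 3 - w 4)
  + 2 * (K - H) * (3 * w 3 - 3 * w 4) + K * (K - 1) * w 4.

Lemma S2_eq k :
  \sum_(0 <= i < k) \sum_(0 <= i' < k) (i.+1%:R)^-1 * (i'.+1%:R)^-1 * Tm i i' = Q k.
Proof.
elim: k => [|k IH]; first by rewrite big_geq // /Q /Hs /H2s !big_geq //; ring.
rewrite big_nat_recr //=.
rewrite (eq_bigr (fun i => \sum_(0 <= i' < k) (i.+1%:R)^-1 * (i'.+1%:R)^-1 * Tm i i'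
     + (i.+1%:R)^-1 * (k.+1%:R)^-1 * Tm i k)); last by move=> i _; rewrite big_nat_recr.
rewrite big_split /= IH big_nat_recr //=.
set a := 2 * w 2 + (k.+1%:R - 2) * w 3.
set b := 3 * w 3 + (k.+1%:R - 3) * w 4.
have E1 : \sum_(0 <= i < k) (i.+1%:R)^-1 * (k.+1%:R)^-1 * Tm i k
    = (k.+1%:R)^-1 * ((a - b) * Hs k + k%:R * b).
  rewrite -sum_lin mulr_sumr; apply: eq_big_nat => i /andP[_ hi].
  rewrite Tm_lt // -/a -/b; ring.
have E2 : \sum_(0 <= i < k) (k.+1%:R)^-1 * (i.+1%:R)^-1 * Tm k i
    = (k.+1%:R)^-1 * ((a - b) * Hs k + k%:R * b).
  rewrite -E1; apply: eq_bigr => i _; rewrite Tm_sym; ring.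
rewrite E1 E2 Tm_eq /Q /Hs /H2s !big_nat_recr //= -/(Hs k) -/(H2s k) /a /b.
have h := natS_neq0 k.
move: h; rewrite -[k.+1]addn1 natrD => h.
by field.
Qed.

End Pure.

Section Count.
Variables (N m : nat).
Hypothesis hmN : (m <= N)%N.

Lemma card_out : #|outcomes N m| = 'C(N, m).
Proof. by rewrite /outcomes card_draws card_ord. Qed.

Lemma bin_id t : (t <= m)%N ->
  ('C(N - t, m - t) * N ^_ t = 'C(N, m) * m ^_ t)%N.
Proof.
move=> tm.
have tN : (t <= N)%N by apply: leq_trans hmN.
have h : (N - t - (m - t) = N - m)%N by lia.
have e1 := bin_fact (leq_sub2r t hmN); rewrite h in e1.
have e2 := ffact_fact tN.
have e3 := ffact_fact tm.
have e4 := bin_fact hmN.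
apply/eqP; rewrite -(@eqn_pmul2r ((m - t)`! * (N - m)`!)) ?muln_gt0 ?fact_gt0 //.
apply/eqP; rewrite [LHS]mulnAC e1 mulnC e2.
by rewrite -[RHS]mulnA [(_ ^_ _ * _)%N]mulnA e3 e4.
Qed.

Lemma count_sub (T : {set 'I_N}) :
  (#|[set S in outcomes N m | T \subset S]| * N ^_ #|T| = 'C(N, m) * m ^_ #|T|)%N.
Proof.
set t := #|T|.
have tN : (t <= N)%N by rewrite /t; have := max_card T; rewrite card_ord.
case: (leqP t m) => tm; last first.
  rewrite (ffact_small tm) muln0.
  have -> : [set S in outcomes N m | T \subset S] = set0.
    apply/setP => S; rewrite !inE; apply/negbTE; apply/negP => /andP[/eqP hS hT].
    by move: (subset_leq_card hT); rewrite hS -/t leqNgt tm.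
  by rewrite cards0.
rewrite -bin_id //.
congr (_ * _)%N.
have cT : #|~: T| = (N - t)%N by have := cardsC T; rewrite card_ord -/t; lia.
rewrite -cT -cards_draws.
rewrite -(@card_in_imset _ _ (fun B => B :|: T) [set A : {set 'I_N} | (A \subset ~: T) && (#|A| == (m - t)%N)]).
  apply: eq_card => S; rewrite !inE.
  apply/andP/imsetP.
    case=> /eqP hS hT; exists (S :\: T).
      rewrite inE subsetDr /= cardsDS // hS.
    by []. apply/setP => x; rewrite !inE; case xT: (x \in T) => /=; last by rewrite orbF.
    by rewrite (subsetP hT) ?orbT.
  case=> B; rewrite inE => /andP[hB /eqP cB] ->; split; last by rewrite subsetUr.
  have d : B :&: T = set0.
    apply/setP => x; rewrite !inE; apply/negbTE; apply/negP => /andP[xB xT].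
    by have := subsetP hB x xB; rewrite inE xT.
  by rewrite cardsU d cards0 subn0 cB -/t subnK.
move=> B1 B2; rewrite !inE => /andP[h1 _] /andP[h2 _] e.
have key : forall B : {set 'I_N}, B \subset ~: T -> (B :|: T) :\: T = B.
  move=> B hB; apply/setP => x; rewrite !inE.
  case xT: (x \in T) => /=; last by rewrite orbF.
  by apply/esym/negP => xB; have := subsetP hB x xB; rewrite inE xT.
by rewrite -(key _ h1) e key.
Qed.

End Count.

Section Prob.
Variables (R : realFieldType) (N m : nat).
Hypothesis hmN : (m <= N)%N.

Definition wt (t : nat) : R := (m ^_ t)%:R / (N ^_ t)%:R.

Lemma out_neq0 : (#|outcomes N m|%:R : R) != 0.
Proof. by rewrite card_out pnatr_eq0 -lt0n bin_gt0. Qed.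

Lemma eq_Expect (X Y : {set 'I_N} -> R) : (forall S, X S = Y S) -> Expect m X = Expect m Y.
Proof. by move=> e; rewrite /Expect; congr (_ * _); apply: eq_bigr => S _. Qed.

Lemma ExpectZ c (X : {set 'I_N} -> R) : Expect m (fun S => c * X S) = c * Expect m X.
Proof. by rewrite /Expect -mulr_sumr mulrCA. Qed.

Lemma Expect_sum (I : Type) (r : seq I) (F : I -> {set 'I_N} -> R) :
  Expect m (fun S => \sum_(i <- r) F i S) = \sum_(i <- r) Expect m (F i).
Proof. by rewrite /Expect exchange_big mulr_sumr. Qed.

Lemma Expect_sub (T : {set 'I_N}) : Expect m (fun S => ((T \subset S)%:R : R)) = wt #|T|.
Proof.
rewrite /Expect.
have -> : \sum_(S in outcomes N m) ((T \subset S)%:R : R)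
    = (#|[set S in outcomes N m | T \subset S]|)%:R.
  rewrite -sum1_card natr_sum big_mkcond [RHS]big_mkcond /=; apply: eq_bigr => S _.
  by rewrite !inE; case: (#|S| == m); case: (T \subset S).
have tN : (#|T| <= N)%N by have := max_card T; rewrite card_ord.
have nz : ((N ^_ #|T|)%:R : R) != 0 by rewrite pnatr_eq0 -lt0n ffact_gt0.
have hc := congr1 (fun x : nat => (x%:R : R)) (@count_sub N m hmN T); rewrite /= !natrM in hc.
rewrite /wt -[X in _ * X = _](mulfK nz) hc card_out mulrA mulKf //.
by rewrite -card_out out_neq0.
Qed.

Lemma Ind_S (S : {set 'I_N}) x :
  Ind R S x.+1 = ([exists i : 'I_N, (val i == x) && (i \in S)])%:R.
Proof.
rewrite /Ind.
have -> : [exists i : 'I_N, (i.+1 == x.+1) && (i \in S)]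
   = [exists i : 'I_N, (val i == x) && (i \in S)] by [].
by case: [exists _, _].
Qed.

Lemma Ind_prod (S : {set 'I_N}) (s : seq nat) : all (fun x => (x < N)%N) s ->
  \prod_(x <- s) Ind R S x.+1 = (([set i : 'I_N | val i \in s]) \subset S)%:R.
Proof.
move=> hs.
have -> : ([set i : 'I_N | val i \in s] \subset S)
    = all (fun x => [exists i : 'I_N, (val i == x) && (i \in S)]) s.
  apply/subsetP/allP.
    move=> H x xs; have xN := allP hs x xs.
    apply/existsP; exists (Ordinal xN); rewrite eqxx /=; apply: H; by rewrite inE.
  move=> H i; rewrite inE => /H /existsP [j /andP[/eqP ji jS]].
  by have <- : j = i by apply: val_inj.
elim: s {hs} => [|x s IH]; first by rewrite big_nil.
rewrite big_cons IH Ind_S /=; case: [exists _, _]; case: (all _ _);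
  by rewrite /= ?mul1r ?mul0r.
Qed.

Lemma card_T (s : seq nat) : all (fun x => (x < N)%N) s ->
  #|[set i : 'I_N | val i \in s]| = su s.
Proof.
move=> hs; rewrite -(@count_all N s hs) -sum_mem_nat ?undup_uniq //.
rewrite -sum1_card big_mkcond /= big_mkord; apply: eq_bigr => i _.
by rewrite inE mem_undup; case: (val i \in s).
Qed.

Lemma Expect_prod (s : seq nat) : all (fun x => (x < N)%N) s ->
  Expect m (fun S : {set 'I_N} => \prod_(x <- s) Ind R S x.+1) = wt (su s).
Proof.
move=> hs; rewrite (eq_Expect _ _ (fun S => Ind_prod S s hs)) Expect_sub card_T //.
Qed.

Lemma Var_eq (X : {set 'I_N} -> R) :
  Variance m X = Expect m (fun S => X S ^+ 2) - Expect m X ^+ 2.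
Proof.
rewrite /Variance /Expect.
set c : R := (#|outcomes N m|%:R).
set sX := \sum_(S in outcomes N m) X S.
have nz : c != 0 := out_neq0.
have -> : \sum_(S in outcomes N m) (X S - c^-1 * sX) ^+ 2
    = \sum_(S in outcomes N m) X S ^+ 2 - 2 * (c^-1 * sX) * sX + c * (c^-1 * sX) ^+ 2.
  rewrite (eq_bigr (fun S => X S ^+ 2 - 2 * (c^-1 * sX) * X S + (c^-1 * sX) ^+ 2));
    last by move=> S _; ring.
  rewrite big_split sumrB /= -mulr_sumr sumr_const -/sX /c mulr_natl.
  ring.
by field.
Qed.

End Prob.

Lemma ffactR (R : realFieldType) n t :
  ((n ^_ t)%:R : R) = \prod_(i < t) (n%:R - i%:R).
Proof.
elim: t n => [|t IH] n; first by rewrite ffactn0 big_ord0.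
rewrite ffactnS big_ord_recl /=; case: n => [|n].
  by rewrite mul0n subr0 mul0r.
rewrite natrM /= IH subr0; congr (_ * _); apply: eq_bigr => i _.
rewrite /bump leq0n add1n -[n.+1]addn1 -[i.+1]addn1 !natrD; ring.
Qed.

Lemma harmE (R : realFieldType) k : harm R k = Hs R k.
Proof. by rewrite /harm big_add1. Qed.

Lemma harm2E (R : realFieldType) k : harm2 R k = H2s R k.
Proof. by rewrite /harm2 big_add1. Qed.

Section Main.
Variables (R : realFieldType) (N m k : nat).
Hypothesis hmN : (m <= N)%N.
Hypothesis hkN : (k <= N)%N.

Local Notation P S s := (\prod_(x <- s) Ind R S x.+1).

Lemma APatE (S : {set 'I_N}) : APat R m k S =
  ((minn m k)%:R)^-1 * \sum_(0 <= i < k) (i.+1%:R)^-1 * \sum_(0 <= j < i.+1) P S [:: j; i].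
Proof.
rewrite /APat big_add1 /=; congr (_ * _); apply: eq_bigr => i _.
rewrite /Pat big_add1 /= -mulrA mulr_suml mulr_sumr [RHS]mulr_sumr.
by apply: eq_bigr => j _; rewrite big_cons big_seq1.
Qed.

Lemma APat2E (S : {set 'I_N}) : APat R m k S ^+ 2 =
  ((minn m k)%:R)^-1 ^+ 2 * \sum_(0 <= i < k) \sum_(0 <= i' < k)
     (i.+1%:R)^-1 * (i'.+1%:R)^-1 *
     \sum_(0 <= j < i.+1) \sum_(0 <= j' < i'.+1) P S [:: j; i; j'; i'].
Proof.
rewrite APatE expr2 mulrACA; congr (_ * _).
rewrite mulr_suml; apply: eq_bigr => i _; rewrite mulr_sumr; apply: eq_bigr => i' _.
rewrite mulrACA big_distrlr; congr (_ * _).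
apply: eq_bigr => j _; apply: eq_bigr => j' _. by rewrite -[[:: j; i; j'; i']]/([:: j; i] ++ [:: j'; i']) big_cat.
Qed.


Lemma EX2 : Expect m (fun S : {set 'I_N} => APat R m k S ^+ 2) =
  ((minn m k)%:R)^-1 ^+ 2 * \sum_(0 <= i < k) \sum_(0 <= i' < k)
     (i.+1%:R)^-1 * (i'.+1%:R)^-1 * Tm R (wt R N m) i i'.
Proof.
rewrite (@eq_Expect R N m _ _ APat2E) ExpectZ Expect_sum; congr (_ * _).
apply: eq_big_nat => i /andP[_ hi]; rewrite Expect_sum.
apply: eq_big_nat => i' /andP[_ hi']; rewrite ExpectZ; congr (_ * _).
rewrite Expect_sum /Tm; apply: eq_big_nat => j /andP[_ hj]; rewrite Expect_sum.
apply: eq_big_nat => j' /andP[_ hj']; rewrite (@Expect_prod R N m hmN) //=.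
have hiN : (i < N)%N by lia.
have hi'N : (i' < N)%N by lia.
have hjN : (j < N)%N by lia.
have hj'N : (j' < N)%N by lia.
by rewrite hiN hi'N hjN hj'N.
Qed.

Lemma EX1 : Expect m (fun S : {set 'I_N} => APat R m k S) =
  ((minn m k)%:R)^-1 * \sum_(0 <= i < k) (i.+1%:R)^-1 *
     \sum_(0 <= j < i.+1) wt R N m (su [:: j; i]).
Proof.
rewrite (@eq_Expect R N m _ _ APatE) ExpectZ Expect_sum; congr (_ * _).
apply: eq_big_nat => i /andP[_ hi]; rewrite ExpectZ Expect_sum; congr (_ * _).
apply: eq_big_nat => j /andP[_ hj]; rewrite (@Expect_prod R N m hmN) //=.
have hiN : (i < N)%N by lia.
have hjN : (j < N)%N by lia.
by rewrite hiN hjN.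
Qed.

End Main.

Lemma wtE (R : realFieldType) N m t :
  wt R N m t = (\prod_(i < t) (m%:R - i%:R)) / (\prod_(i < t) (N%:R - i%:R)).
Proof. by rewrite /wt !ffactR. Qed.

Theorem theorem2 (R : realFieldType) (N m k : nat)
  (hN : (4 <= N)%N) (hm1 : (1 <= m)%N) (hmN : (m <= N)%N)
  (hk1 : (1 <= k)%N) (hkN : (k <= N)%N) :
  let n : R := N%:R in
  let r : R := m%:R in
  let M : R := (minn m k)%:R in
  let Hk : R := harm R k in
  let Hk2 : R := harm2 R k in
  let A : R := 1 - r / n - (r - 1) / (n - 1) *
      (3 - 2 * ((r - 2) / (n - 2)) - r / n * (2 - (r - 1) / (n - 1))) in
  let B : R := (r - 1) / (n - 1) *
      (3 * (1 - (r - 2) / (n - 2)) - 2 * (r / n) * (1 - (r - 1) / (n - 1))) in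
  let C : R := (r - 1) / (n - 1) *
      ((r - 2) / (n - 2) - r * (r - 1) / (n * (n - 1))) in
  let D : R := (r - 1) / (n - 1) *
      (2 - 5 * ((r - 2) / (n - 2)) + 3 * ((r - 2) * (r - 3) / ((n - 2) * (n - 3))))
      - r / n * (1 - (r - 1) / (n - 1)) ^+ 2 in
  let E : R := (r - 1) / (n - 1) *
      (3 * ((r - 2) / (n - 2)) * (1 - (r - 3) / (n - 3))
       - r / n * (1 - (r - 1) / (n - 1))) in
  let F : R := (r - 1) / (n - 1) *
      ((r - 2) / (n - 2) * (1 - (r - 3) / (n - 3))
       - r / n * (1 - (r - 1) / (n - 1))) in
  let G : R := (r - 1) / (n - 1) *
      ((r - 2) * (r - 3) / ((n - 2) * (n - 3)) - r / n * ((r - 1) / (n - 1))) in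
  @Variance R N m (@APat R N m k) =
    (M ^+ 2)^-1 * (r / n) *
      (k%:R * (C + 2 * (E - F) + (k%:R - 1) * G)
       + Hk * (B - 2 * (E - k%:R * F))
       + Hk ^+ 2 * D
       + Hk2 * (A - D)).
Proof.
move=> n r M Hk Hk2 A B C D E F G.
rewrite (@Var_eq R N m hmN) (@EX2 R N m k hmN hkN) (@EX1 R N m k hmN hkN).
rewrite S2_eq S1_eq /Hk /Hk2 harmE harm2E /Q /=.
rewrite !wtE !big_ord_recr !big_ord0 /=.
rewrite /A /B /C /D /E /F /G /n /r /M.
have h4 : (4 : R) <= N%:R by rewrite (ler_nat R 4 N).
have hM : (1 : R) <= (minn m k)%:R by rewrite (ler_nat R 1); rewrite leq_min hm1 hk1.
have n0 : (N%:R : R) != 0 by apply: lt0r_neq0; lra.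
have n1 : (N%:R - 1 : R) != 0 by apply: lt0r_neq0; lra.
have n2 : (N%:R - 2 : R) != 0 by apply: lt0r_neq0; lra.
have n3 : (N%:R - 3 : R) != 0 by apply: lt0r_neq0; lra.
have m0 : ((minn m k)%:R : R) != 0 by apply: lt0r_neq0; lra.
rewrite !subr0 !mul1r.
field.
by rewrite n0 n1 n2 n3 m0.
Qed.
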